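(* A group $G$ admits a nonzero homogeneous quasimorphism if and only if $G$ acts dominatingly on some quasi-total triple $(X,\preceq,T)$ (the action is not required to be effective, and the triple is not required to be complete).
   Context: A homogeneous quasimorphism is $f:G\to\mathbb{R}$ with $\sup_{h,k}|f(hk)-f(h)-f(k)|<\infty$ and $f(h^n)=nf(h)$ for $n\in\mathbb{N}$. For a poset $(X,\preceq)$, an order-preserving bijection $T$ is dominant if for all $a,b\in X$ there is $n\in\mathbb{N}$ with $T^na\succ b$. $(X,\preceq,T)$ is a quasi-total triple if $T$ is a dominant order-preserving bijection of $X$ and there is $N\in\mathbb{N}$ such that for all $a,b\in X$ some $k\in\{0,\dots,N\}$ satisfies $a\preceq T^kb$ or $b\preceq T^ka$. An action of $G$ on $(X,\preceq,T)$ is dominating if $G$ acts by order-preserving bijections commuting with $T$ and there exist $g\in G$, $x\in X$, $n\in\mathbb{N}$ with $g.x\succeq T^n.x$. *)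

(* Defs.v *)
From mathcomp Require Import ssreflect ssrfun ssrbool eqtype ssrnat monoid.
From Stdlib Require Import Reals.

Set Implicit Arguments.
Unset Strict Implicit.
Unset Printing Implicit Defensive.

Definition quasimorphism (G : groupType) (f : G -> R) : Prop :=
  exists C : R, forall h k : G,
    (Rabs (f (mul h k) - f h - f k) <= C)%R.

Definition homogeneous_quasimorphism (G : groupType) (f : G -> R) : Prop :=
  quasimorphism f /\
  forall (h : G) (n : nat), (0 < n)%N -> f (natexp h n) = (INR n * f h)%R.

Definition admits_nonzero_hqm (G : groupType) : Prop :=
  exists f : G -> R, homogeneous_quasimorphism f /\ exists g : G, f g <> 0%R.

Definition partial_order (X : Type) (le : X -> X -> Prop) : Prop :=
  (forall a, le a a) /\
  (forall a b, le a b -> le b a -> a = b) /\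
  (forall a b c, le a b -> le b c -> le a c).

Definition sgt (X : Type) (le : X -> X -> Prop) (a b : X) : Prop :=
  le b a /\ a <> b.

Definition order_preserving_bijection (X : Type) (le : X -> X -> Prop)
  (T : X -> X) : Prop :=
  bijective T /\ forall a b, le a b <-> le (T a) (T b).

Definition dominant (X : Type) (le : X -> X -> Prop) (T : X -> X) : Prop :=
  order_preserving_bijection le T /\
  forall a b : X, exists n : nat, (0 < n)%N /\ sgt le (iter n T a) b.

Definition quasi_total_triple (X : Type) (le : X -> X -> Prop) (T : X -> X)
  : Prop :=
  partial_order le /\ dominant le T /\
  exists N : nat, forall a b : X,
    exists k : nat, (k <= N)%N /\ (le a (iter k T b) \/ le b (iter k T a)).

Definition group_action (G : groupType) (X : Type) (act : G -> X -> X) : Prop :=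
  (forall x, act one x = x) /\
  (forall g h x, act (mul g h) x = act g (act h x)).

Definition dominating_action (G : groupType) (X : Type) (le : X -> X -> Prop)
  (T : X -> X) (act : G -> X -> X) : Prop :=
  group_action act /\
  (forall g : G, order_preserving_bijection le (act g)) /\
  (forall (g : G) (x : X), act g (T x) = T (act g x)) /\
  exists (g : G) (x : X) (n : nat), (0 < n)%N /\ le (iter n T x) (act g x).

Definition acts_dominatingly_on_some_qtt (G : groupType) : Prop :=
  exists (X : Type) (le : X -> X -> Prop) (T : X -> X) (act : G -> X -> X),
    quasi_total_triple le T /\ dominating_action le T act.

(* Main.v *)
From Stdlib Require Import Reals Lra Lia ZArith ClassicalEpsilon Classical.
From mathcomp Require Import ssreflect ssrfun ssrbool eqtype ssrnat monoid.
From mathcomp Require Import zify.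
Require Import Defs.

Module RevM.
Section Rev.
Variables (X : Type) (le : X -> X -> Prop) (T : X -> X).
Hypothesis Hq : quasi_total_triple le T.

Lemma le_refl a : le a a. Proof. by have [[H _] _] := Hq. Qed.
Lemma le_anti a b : le a b -> le b a -> a = b.
Proof. by have [[_ [H _]] _] := Hq; apply: H. Qed.
Lemma le_trans a b c : le a b -> le b c -> le a c.
Proof. by have [[_ [_ H]] _] := Hq; apply: H. Qed.
Lemma T_iff a b : le a b <-> le (T a) (T b).
Proof. by have [_ [[[_ H] _] _]] := Hq; apply: H. Qed.
Lemma T_inj : injective T.
Proof. by have [_ [[[H _] _] _]] := Hq; apply: bij_inj. Qed.
Lemma iterT_iff k a b : le a b <-> le (iter k T a) (iter k T b).
Proof.
elim: k => [//|k IH] /=; split.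
- by move/(proj1 IH)/(proj1 (T_iff _ _)).
- by move/(proj2 (T_iff _ _))/(proj2 IH).
Qed.
Lemma iterT_mono k a b : le a b -> le (iter k T a) (iter k T b).
Proof. exact: (proj1 (iterT_iff k a b)). Qed.
Lemma iterT_refl k a b : le (iter k T a) (iter k T b) -> le a b.
Proof. exact: (proj2 (iterT_iff k a b)). Qed.
Lemma iterT_inj k : injective (iter k T).
Proof. elim: k => [//|k IH] a b /= /T_inj; exact: IH. Qed.
Lemma domin a b : exists n, (0 < n)%N /\ le b (iter n T a) /\ iter n T a <> b.
Proof.
have [_ [[_ H] _]] := Hq; have [n [Hn [H1 H2]]] := H a b; by exists n.
Qed.

Lemma up_mult z m k : le z (iter m T z) -> le z (iter (m * k) T z).
Proof.
move=> H; elim: k => [|k IH]; first by rewrite muln0; apply: le_refl.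
rewrite mulnS iterD; apply: le_trans H _; exact: (proj1 (iterT_iff m _ _) IH).
Qed.
Lemma down_mult z m k : le (iter m T z) z -> le (iter (m * k) T z) z.
Proof.
move=> H; elim: k => [|k IH]; first by rewrite muln0; apply: le_refl.
rewrite mulnS iterD; apply: le_trans _ H; exact: (proj1 (iterT_iff m _ _) IH).
Qed.

Lemma no_down d z : le (iter d T z) z -> d = 0.
Proof.
case: d => [//|d] H.
case: (domin z z) => m [Hm [H1 H2]].
have A : le (iter (d.+1 * m) T z) z by apply: down_mult.
have B : le z (iter (m * d.+1) T z) by apply: up_mult.
have E : iter (m * d.+1) T z = z by apply: le_anti=> //; rewrite mulnC.
have C : le (iter m T z) (iter (m * d.+1) T z).
  by rewrite mulnS iterD; apply: iterT_mono; apply: up_mult.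
by exfalso; apply: H2; apply: le_anti => //; rewrite -{2}E.
Qed.

Definition Rz (n : Z) x y := exists p q : nat,
  n = (Z.of_nat p - Z.of_nat q)%Z /\ le (iter p T x) (iter q T y).

Lemma Rz_trans a b x y z : Rz a x y -> Rz b y z -> Rz (a + b) x z.
Proof.
move=> [p [q [-> H1]]] [p' [q' [-> H2]]].
exists (p' + p), (q + q'); split; first lia.
rewrite iterD; apply: le_trans (_ : le _ (iter (p' + q) T y)) _.
  by rewrite iterD; apply: iterT_mono.
by rewrite addnC !iterD; apply: iterT_mono.
Qed.

Lemma Rz_ne x y : exists n, Rz n x y.
Proof.
case: (domin y x) => m [_ [H _]]; exists (- Z.of_nat m)%Z, 0, m; split=> //; lia.
Qed.

Lemma Rz_bnd x y : exists B, forall n, Rz n x y -> (n < B)%Z.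
Proof.
case: (domin x y) => m [_ [H1 H2]]; exists (Z.of_nat m) => n [p [q [-> H]]].
apply/Z.nle_gt => Hle.
have H3 : le (iter p T x) (iter (q + m) T x).
  by rewrite iterD; apply: le_trans H _; apply: iterT_mono.
have Ep : p = (p - (q + m)) + (q + m) by rewrite subnK //; apply/leP; lia.
move: H3; rewrite {1}Ep iterD => /no_down Hd.
have Ep' : p = q + m by rewrite {1}Ep Hd.
apply: H2; apply: (@iterT_inj q); apply: le_anti.
  by rewrite -iterD -Ep'.
by apply: iterT_mono.
Qed.

Lemma Zmax_ex (P : Z -> Prop) n0 B : P n0 -> (forall n, P n -> (n < B)%Z) ->
  exists m, P m /\ forall n, P n -> (n <= m)%Z.
Proof.
move=> H0 HB.
suff: forall k n0, P n0 -> (Z.to_nat (B - n0) <= k)%coq_nat ->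
  exists m, P m /\ forall n, P n -> (n <= m)%Z by move/(_ _ n0 H0); apply.
elim=> [|k IH] n1 H1 Hk.
  by have := HB _ H1; lia.
case: (classic (exists n, P n /\ (n1 < n)%Z)) => [[n [Pn Hn]]|Hno].
  apply: (IH n Pn); have := HB _ Pn; lia.
exists n1; split=> // n Pn; apply/Z.nlt_ge => Hlt; apply: Hno; by exists n.
Qed.

Lemma rho_ex x y : exists m, Rz m x y /\ forall n, Rz n x y -> (n <= m)%Z.
Proof.
case: (Rz_ne x y) => n0 H0; case: (Rz_bnd x y) => B HB; exact: Zmax_ex H0 HB.
Qed.

Definition rho x y : Z := proj1_sig (constructive_indefinite_description _ (rho_ex x y)).
Lemma rho_R x y : Rz (rho x y) x y.
Proof. exact: (proj1 (proj2_sig (constructive_indefinite_description _ (rho_ex x y)))). Qed.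
Lemma rho_max x y n : Rz n x y -> (n <= rho x y)%Z.
Proof. exact: (proj2 (proj2_sig (constructive_indefinite_description _ (rho_ex x y))) n). Qed.

Lemma rho_super x y z : (rho x y + rho y z <= rho x z)%Z.
Proof. apply: rho_max; apply: Rz_trans; apply: rho_R. Qed.

Lemma rho_sym_bnd : exists K : Z, forall y z, (- K <= rho y z + rho z y)%Z.
Proof.
have [_ [_ [N HN]]] := Hq; exists (2 * Z.of_nat N + 1)%Z => y z.
have [p [q [Er Hr]]] := rho_R y z.
case: (HN (iter q T z) (iter (p + N.+1) T y)) => k [/leP Hk [H|H]].
- have : Rz (Z.of_nat q - Z.of_nat (k + (p + N.+1)))%Z z y.
    by exists q, (k + (p + N.+1)); split=> //; rewrite iterD.
  move/rho_max; lia.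
- have : Rz (Z.of_nat (p + N.+1) - Z.of_nat (k + q))%Z y z.
    by exists (p + N.+1), (k + q); split=> //; rewrite (iterD k).
  move/rho_max; lia.
Qed.

Section Act.
Variables (G : groupType) (act : G -> X -> X).
Hypothesis Hd : dominating_action le T act.

Lemma act_iff g a b : le a b <-> le (act g a) (act g b).
Proof. by case: Hd => _ [H _]; case: (H g) => _; apply. Qed.
Lemma act_iter g n x : act g (iter n T x) = iter n T (act g x).
Proof.
case: Hd => _ [_ [H _]]; elim: n => [//|n IH] /=; by rewrite H IH.
Qed.
Lemma act_mul g h x : act (mul g h) x = act g (act h x).
Proof. by case: Hd => [[_ H] _]. Qed.

Lemma Rz_act g n x y : Rz n x y -> Rz n (act g x) (act g y).
Proof.
move=> [p [q [E H]]]; exists p, q; split=> //; rewrite -!act_iter; exact: (proj1 (act_iff g _ _) H).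
Qed.
Lemma Rz_act' g n x y : Rz n (act g x) (act g y) -> Rz n x y.
Proof.
move=> [p [q [E H]]]; exists p, q; split=> //; move: H; rewrite -!act_iter; exact: (proj2 (act_iff g _ _)).
Qed.
Lemma rho_act g x y : rho (act g x) (act g y) = rho x y.
Proof.
apply: Z.le_antisymm; apply: rho_max.
  by apply: Rz_act'; apply: rho_R.
by apply: Rz_act; apply: rho_R.
Qed.

Lemma a_super x g h : (rho x (act g x) + rho x (act h x) <= rho x (act (mul g h) x))%Z.
Proof. rewrite -(rho_act g x (act h x)) -act_mul; exact: rho_super. Qed.

Lemma a_ub : exists K : Z, forall x g h,
  (rho x (act (mul g h) x) <= rho x (act g x) + rho x (act h x) + K)%Z.
Proof.
case: rho_sym_bnd => K HK; exists K => x g h.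
rewrite -(rho_act g x (act h x)) -act_mul.
have := rho_super x (act (mul g h) x) (act g x).
have := HK (act g x) (act (mul g h) x); lia.
Qed.

End Act.
End Rev.
End RevM.
Module HomM.
Open Scope R_scope.
Lemma div_le x y c : 0 < c -> x <= y * c -> x / c <= y.
Proof.
move=> Hc H; apply: (Rmult_le_reg_r c) => //.
rewrite /Rdiv Rmult_assoc Rinv_l ?Rmult_1_r //; lra.
Qed.
Lemma le_div x y c : 0 < c -> y * c <= x -> y <= x / c.
Proof.
move=> Hc H; apply: (Rmult_le_reg_r c) => //.
rewrite /Rdiv Rmult_assoc Rinv_l ?Rmult_1_r //; lra.
Qed.

Lemma div_le' x y c : 0 < c -> x / c <= y -> x <= y * c.
Proof.
move=> Hc H; have -> : x = x / c * c by field; lra.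
by apply: Rmult_le_compat_r => //; lra.
Qed.
Lemma le_div' x y c : 0 < c -> y <= x / c -> y * c <= x.
Proof.
move=> Hc H; have -> : x = x / c * c by field; lra.
by apply: Rmult_le_compat_r => //; lra.
Qed.

Section Homog.
Variables (G : groupType) (a : G -> R) (K : R).
Hypotheses (Hsup : forall g h, a g + a h <= a (mul g h))
  (Hub : forall g h, a (mul g h) <= a g + a h + K).

Lemma K_ge0 : 0 <= K.
Proof. have := Hsup one one; have := Hub one one; rewrite mulg1; lra. Qed.

Definition b g n := a (natexp g n).

Lemma b_ge g j n : INR j.+1 * b g n <= b g (j.+1 * n).
Proof.
elim: j => [|j IH]; first by rewrite mul1n; simpl INR; rewrite Rmult_1_l; apply: Rle_refl.
rewrite mulSn /b expgnDr S_INR.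
have := Hsup (natexp g n) (natexp g (j.+1 * n)); rewrite /b in IH; rewrite Rmult_plus_distr_r Rmult_1_l. move=> H; apply: Rle_trans H; rewrite Rplus_comm; apply: Rplus_le_compat_l. exact: IH.
Qed.

Lemma b_le g n : b g n.+1 <= INR n.+1 * (a g + K).
Proof.
elim: n => [|n IH]; first by rewrite /b expg1; have := K_ge0; simpl INR; lra.
have E : natexp g n.+2 = mul g (natexp g n.+1) by exact: expgS.
rewrite /b E S_INR; have := Hub g (natexp g n.+1); rewrite /b in IH; move: (INR n.+1) IH => x IH; move: (a (mul g (natexp g n.+1))) => y; nra.
Qed.

Definition E g r := exists n : nat, r = b g n.+1 / INR n.+1.

Lemma E_bnd g : bound (E g).
Proof.
exists (a g + K) => r [n ->].
have Hp : 0 < INR n.+1 by apply: lt_0_INR; lia.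
apply: div_le => //; rewrite Rmult_comm; exact: b_le.
Qed.
Lemma E_ne g : exists r, E g r.
Proof. by exists (b g 1 / INR 1), 0%N. Qed.

Definition f g := proj1_sig (completeness _ (E_bnd g) (E_ne g)).
Lemma f_lub g : is_lub (E g) (f g).
Proof. exact: (proj2_sig (completeness _ (E_bnd g) (E_ne g))). Qed.

Lemma f_ge g : a g <= f g.
Proof.
have [H _] := f_lub g; have := H (b g 1 / INR 1) (ex_intro _ 0%N erefl).
rewrite /b expg1 /=; lra.
Qed.
Lemma f_le g : f g <= a g + K.
Proof.
have [_ H] := f_lub g; apply: H => r [n ->].
have Hp : 0 < INR n.+1 by apply: lt_0_INR; lia.
apply: div_le => //; rewrite Rmult_comm; exact: b_le.
Qed.

Lemma f_hom g k : (0 < k)%N -> f (natexp g k) = INR k * f g.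
Proof.
case: k => [//|k] _.
have Hk : 0 < INR k.+1 by apply: lt_0_INR; lia.
apply: Rle_antisym.
- have [_ H] := f_lub (natexp g k.+1); apply: H => r [n ->].
  have Hp : 0 < INR n.+1 by apply: lt_0_INR; lia.
  apply: div_le => //.
  have Em : (k.+1 * n.+1 = (n + k * n.+1).+1)%N by lia.
  have [H1 _] := f_lub g.
  have := H1 _ (ex_intro _ (n + k * n.+1)%N erefl); rewrite -Em.
  have Hq : 0 < INR (k.+1 * n.+1) by apply: lt_0_INR; lia.
  move/(div_le' _ _ _ Hq); rewrite -multE mult_INR multE /b -expgnA => H2.
  have -> : INR k.+1 * f g * INR n.+1 = f g * (INR k.+1 * INR n.+1) by ring.
  exact: H2.
- have Hfk : f g <= f (natexp g k.+1) / INR k.+1.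
    have [_ H] := f_lub g; apply: H => r [n ->].
    have Hp : 0 < INR n.+1 by apply: lt_0_INR; lia.
    have [H1 _] := f_lub (natexp g k.+1).
    have := H1 _ (ex_intro _ n erefl); rewrite /b -expgnA => H2.
    have H3 := b_ge g k n.+1.
    apply: le_div => //.
    have -> : b g n.+1 / INR n.+1 * INR k.+1 = (INR k.+1 * b g n.+1) / INR n.+1
      by rewrite /Rdiv; ring.
    apply: Rle_trans H2.
    apply: Rmult_le_compat_r; first by apply/Rlt_le/Rinv_0_lt_compat.
    exact: H3.
  have := le_div' _ _ _ Hk Hfk; rewrite Rmult_comm; done.
Qed.

Lemma homogenize : exists F : G -> R, homogeneous_quasimorphism F /\
  forall g, a g <= F g.
Proof.
exists f; split; last exact: f_ge.
split; last exact: f_hom.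
exists (2 * K) => g h; apply: Rabs_le.
have := f_ge g; have := f_ge h; have := f_ge (mul g h).
have := f_le g; have := f_le h; have := f_le (mul g h).
have := Hsup g h; have := Hub g h; lra.
Qed.
End Homog.
Close Scope R_scope.
End HomM.
Module FwdM.
Open Scope R_scope.
Lemma abs_bnd x c : Rabs x <= c -> - c <= x <= c.
Proof. move=> H; have := Rle_abs x; have := Rle_abs (- x); rewrite Rabs_Ropp; lra. Qed.

Section Fwd.
Variables (G : groupType) (f : G -> R) (C : R).
Hypotheses (HC : forall h k, Rabs (f (mul h k) - f h - f k) <= C)
  (Hh : forall h n, (0 < n)%N -> f (natexp h n) = INR n * f h).

Lemma C_ge0 : 0 <= C.
Proof. apply: Rle_trans (HC one one); exact: Rabs_pos. Qed.

Lemma f_one : f one = 0.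
Proof.
have := Hh one 2 erefl; rewrite expg1n; move: (f one) => y; simpl INR; lra.
Qed.

Lemma f_inv g : f (inv g) = - f g.
Proof.
set t := f g + f (inv g).
suff : t = 0 by rewrite /t; lra.
have Hn : forall n, Rabs (INR n * t) <= C.
  case=> [|n]; first by rewrite Rmult_0_l Rabs_R0; exact: C_ge0.
  have := HC (natexp g n.+1) (natexp (inv g) n.+1).
  have E : mul (natexp g n.+1) (natexp (inv g) n.+1) = one.
    by rewrite expVgn mulgV.
  rewrite E f_one !Hh // => H.
  have -> : INR n.+1 * t = - (0 - INR n.+1 * f g - INR n.+1 * f (inv g)) by rewrite /t; ring.
  by rewrite Rabs_Ropp.
case: (Req_dec t 0) => // Ht; exfalso.
have Hp : 0 < Rabs t by apply: Rabs_pos_lt.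
case: (INR_archimed (Rabs t) C Hp) => n Hn'.
have := Hn n; rewrite Rabs_mult (Rabs_pos_eq (INR n)); last exact: pos_INR.
lra.
Qed.

Definition D := C + 1.
Lemma D_pos : 0 < D. Proof. have := C_ge0; rewrite /D; lra. Qed.

Definition X := (G * Z)%type.
Definition s (x y : X) := f (mul (inv x.1) y.1) + IZR (y.2 - x.2) * D.
Definition le (x y : X) := x = y \/ D <= s x y.
Definition T (x : X) : X := (x.1, (x.2 + 1)%Z).
Definition act (k : G) (x : X) : X := (mul k x.1, x.2).

Lemma s_anti x y : s y x = - s x y.
Proof.
rewrite /s.
have -> : mul (inv y.1) x.1 = inv (mul (inv x.1) y.1) by rewrite invgM invgK.
rewrite f_inv.
have -> : IZR (x.2 - y.2) = - IZR (y.2 - x.2) by rewrite -opp_IZR; f_equal; lia.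
ring.
Qed.

Lemma s_xx x : s x x = 0.
Proof. by rewrite /s mulVg f_one Z.sub_diag Rmult_0_l Rplus_0_l. Qed.

Lemma s_tri x y z : s x y + s y z - C <= s x z.
Proof.
rewrite /s.
have E : mul (inv x.1) z.1 = mul (mul (inv x.1) y.1) (mul (inv y.1) z.1).
  by rewrite -mulgA (mulgA y.1) mulgV mul1g.
rewrite E.
have := abs_bnd _ _ (HC (mul (inv x.1) y.1) (mul (inv y.1) z.1)).
have -> : IZR (z.2 - x.2) = IZR (y.2 - x.2) + IZR (z.2 - y.2)
  by rewrite -plus_IZR; f_equal; lia.
rewrite Rmult_plus_distr_r.
move: (f (mul (mul (inv x.1) y.1) (mul (inv y.1) z.1))) (f (mul (inv x.1) y.1)) (f (mul (inv y.1) z.1)) => w1 w2 w3.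
lra.
Qed.

Lemma iter_T n x : iter n T x = (x.1, (x.2 + Z.of_nat n)%Z).
Proof.
elim: n => [|n IH] /=; first by rewrite Z.add_0_r; case: x.
rewrite IH /T /=; f_equal; lia.
Qed.

Lemma s_iter n a b : s b (iter n T a) = s b a + INR n * D.
Proof.
rewrite iter_T /s /=.
have -> : IZR (a.2 + Z.of_nat n - b.2) = IZR (a.2 - b.2) + INR n.
  by rewrite INR_IZR_INZ -plus_IZR; f_equal; lia.
ring.
Qed.

Lemma s_T a b : s (T a) (T b) = s a b.
Proof. rewrite /s /T /=; have -> : (b.2 + 1 - (a.2 + 1))%Z = (b.2 - a.2)%Z by lia. by []. Qed.

Lemma s_act k a b : s (act k a) (act k b) = s a b.
Proof. by rewrite /s /act /= invgM -mulgA mulKg. Qed.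

Lemma T_bij : bijective T.
Proof.
exists (fun x : X => (x.1, (x.2 - 1)%Z)) => [[g m]|[g m]] /=; rewrite /T /=; f_equal; lia.
Qed.

Lemma act_bij k : bijective (act k).
Proof.
exists (act (inv k)) => [[g m]|[g m]]; rewrite /act /=; f_equal.
  exact: mulKg.
exact: mulVKg.
Qed.

Lemma fwd_qtt : quasi_total_triple le T.
Proof.
have HD := D_pos; have HC0 := C_ge0.
split; [|split; [split; [split; [exact: T_bij|]|]|]].
- split; [|split].
  + by move=> a; left.
  + move=> a b [->|H1] // [->|H2] //; rewrite s_anti in H2; lra.
  + move=> a b c [->|H1] // [<-|H2]; [by right| right].
    have := s_tri a b c; rewrite /D in H1 H2 *; lra.
- move=> a b; rewrite /le s_T; split.
  + by case=> [->|H]; [left|right].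
  + case=> [H|H]; [left|by right]; exact: (bij_inj T_bij).
- move=> a b.
  case: (INR_archimed D (D - s b a) HD) => n Hn.
  exists n.+1; split=> //; rewrite /sgt.
  have Hs : D <= s b (iter n.+1 T a) by rewrite s_iter S_INR; lra.
  split; first by right.
  move=> E; rewrite E s_xx in Hs; lra.
- exists 1%N => a b; exists 1%N; split=> //.
  case: (Rle_dec 0 (s a b)) => H.
  + left; right; rewrite (s_iter 1); simpl INR; lra.
  + right; right; rewrite (s_iter 1) s_anti; simpl INR; lra.
Qed.

Lemma fwd_dom g0 : f g0 <> 0 -> dominating_action le T act.
Proof.
move=> Hg0; have HD := D_pos.
split; [|split; [|split]].
- split.
  + by case=> g m; rewrite /act mul1g.
  + by move=> g h [k m]; rewrite /act /= mulgA.
- move=> k; split; first exact: act_bij.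
  move=> a b; rewrite /le s_act; split.
  + by case=> [->|H]; [left|right].
  + case=> [H|H]; [left|by right]; exact: (bij_inj (act_bij k)).
- by [].
- have [g Hg] : exists g, 0 < f g.
    case: (Rlt_le_dec 0 (f g0)) => H; first by exists g0.
    by exists (inv g0); rewrite f_inv; lra.
  case: (INR_archimed (f g) (2 * D) Hg) => p Hp.
  case: p Hp => [|p] Hp; first by simpl INR in Hp; lra.
  exists (natexp g p.+1), (one, 0%Z), 1%N; split=> //.
  right; rewrite /s /act /= invg1 mul1g mulg1 Hh //.
move: (INR p.+1 * f g) Hp => u Hp.
  lra.
Qed.
End Fwd.
Close Scope R_scope.
End FwdM.

Theorem corollary1p9 (G : groupType) :
  admits_nonzero_hqm G <-> acts_dominatingly_on_some_qtt G.
Proof.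
split.
- move=> [f [[[C HC] Hh] [g0 Hg0]]].
  exists (FwdM.X G), (@FwdM.le G f C), (@FwdM.T G), (@FwdM.act G); split.
  + exact: (@FwdM.fwd_qtt G f C HC Hh).
  + exact: (@FwdM.fwd_dom G f C HC Hh g0 Hg0).
- move=> [X [le [T [act [Hq Hd]]]]].
  have [_ [_ [_ [g0 [x0 [n0 [Hn0 H0]]]]]]] := Hd.
  have [K HK] := @RevM.a_ub X le T Hq G act Hd.
  pose a := fun g => IZR (@RevM.rho X le T Hq x0 (act g x0)).
  have Hsup : forall g h, (a g + a h <= a (mul g h))%R.
    move=> g h; rewrite /a -plus_IZR; apply: IZR_le; exact: RevM.a_super.
  have Hub : forall g h, (a (mul g h) <= a g + a h + IZR K)%R.
    move=> g h; rewrite /a -!plus_IZR; apply: IZR_le; exact: HK.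
  have [F [HF Hge]] := @HomM.homogenize G a (IZR K) Hsup Hub.
  exists F; split => //; exists g0.
  have : (Z.of_nat n0 <= @RevM.rho X le T Hq x0 (act g0 x0))%Z.
    apply: RevM.rho_max; exists n0, 0%N; split; first lia.
    exact: H0.
  move/IZR_le => H1; have := Hge g0; rewrite /a => H2.
  have : (1 <= IZR (Z.of_nat n0))%R by apply: IZR_le; lia.
  lra.
Qed.
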